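(* Let $d,N\in\mathbb{N}$ and, for each $k=0,\dots,N-1$, let $\mathcal{L}^k_d:(\mathbb{R}^d)^{k+2}\times(\mathbb{R}^d)^{N+1-k}\to\mathbb{R}$, $(x_0,\dots,x_{k+1};y_k,\dots,y_N)\mapsto\mathcal{L}^k_d(x_{(0,k+1)},y_{(k,N)})$, be differentiable. Fix $x_a,x_b,y_a,y_b\in\mathbb{R}^d$ and consider discrete curves $\{x_k\}_{k=0}^N,\{y_k\}_{k=0}^N\subset\mathbb{R}^d$ with $x_0=x_a$, $x_N=x_b$, $y_0=y_a$, $y_N=y_b$, and the discrete action $$S_d=\sum_{k=0}^{N-1}\mathcal{L}^k_d(x_{(0,k+1)},y_{(k,N)}).$$ Consider restricted variations: for $\{\eta_k\}_{k=0}^N\subset\mathbb{R}^d$ with $\eta_0=\eta_N=0$ and $\epsilon\in\mathbb{R}$, the varied curves are $x_k+\epsilon\eta_k$, $y_k+\epsilon\eta_k$ (the same variation for both). Then a pair of discrete curves satisfies $\frac{d}{d\epsilon}S_d\big|_{\epsilon=0}=0$ for all such $\{\eta_k\}$ if and only if $$\sum_{i=k-1}^{N-1}D_{x_k}\mathcal{L}^i_d(x_{(0,i+1)},y_{(i,N)})+\sum_{i=0}^{k}D_{y_k}\mathcal{L}^i_d(x_{(0,i+1)},y_{(i,N)})=0\qquad\text{for }k=1,\dots,N-1,$$ where $D_{x_k}=\partial/\partial x_k$ and $D_{y_k}=\partial/\partial y_k$.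
   Context: Notation: $x_{(0,k+1)}:=(x_0,\dots,x_{k+1})\in(\mathbb{R}^d)^{k+2}$ and $y_{(k,N)}:=(y_k,\dots,y_N)\in(\mathbb{R}^d)^{N+1-k}$. *)

(* Defs.v *)
(* R : realType, R^d rendered as row vectors 'rV[R]_d,
   a discrete curve {x_k}_{k=0}^N as a matrix 'M[R]_(N.+1, d) whose row k is x_k. *)
From HB Require Import structures.
From mathcomp Require Import all_boot all_order all_algebra.
From mathcomp Require Import all_classical all_reals all_analysis.
Set Implicit Arguments. Unset Strict Implicit. Unset Printing Implicit Defensive.
Import Order.TTheory GRing.Theory Num.Theory.
Import numFieldNormedType.Exports.
Local Open Scope ring_scope.

Definition xseg (R : realType) (d N : nat) (i : 'I_N) (x : 'M[R]_(N.+1, d))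
  : 'M[R]_(i.+2, d) := \matrix_(r < i.+2, c < d) x (inord r) c.

(* y_{(i,N)} = (y_i, ..., y_N) for i < N  (N + 1 - i = (N - i).+1 entries) *)
Definition yseg (R : realType) (d N : nat) (i : 'I_N) (y : 'M[R]_(N.+1, d))
  : 'M[R]_((N - i).+1, d) := \matrix_(r < (N - i).+1, c < d) y (inord (i + r)) c.

Definition lagrangians (R : realType) (d N : nat) :=
  forall i : 'I_N, 'M[R]_(i.+2, d) * 'M[R]_((N - i).+1, d) -> R.

Definition action (R : realType) (d N : nat) (L : lagrangians R d N)
  (x y : 'M[R]_(N.+1, d)) : R :=
  \sum_(i < N) L i (xseg i x, yseg i y).

(* partial derivative (gradient, as a row vector in R^d) of
   f : (R^d)^m x (R^d)^n -> R w.r.t. the r-th vector of the first block *)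
Definition pdx (R : realType) (d m n : nat) (f : 'M[R]_(m, d) * 'M[R]_(n, d) -> R)
  (p : 'M[R]_(m, d) * 'M[R]_(n, d)) (r : 'I_m) : 'rV[R]_d :=
  \row_(j < d) ('D_((delta_mx r j, 0) : 'M[R]_(m, d) * 'M[R]_(n, d)) f p).

Definition pdy (R : realType) (d m n : nat) (f : 'M[R]_(m, d) * 'M[R]_(n, d) -> R)
  (p : 'M[R]_(m, d) * 'M[R]_(n, d)) (r : 'I_n) : 'rV[R]_d :=
  \row_(j < d) ('D_((0, delta_mx r j) : 'M[R]_(m, d) * 'M[R]_(n, d)) f p).

(* Main.v *)
Set Warnings "-notation-overridden,-ambiguous-paths,-notation-incompatible-prefix".
Require Import Defs.
From HB Require Import structures.
From mathcomp Require Import all_boot all_order all_algebra.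
From mathcomp Require Import all_classical all_reals all_analysis.
Import Order.TTheory GRing.Theory Num.Theory.
Import numFieldNormedType.Exports.
Local Open Scope ring_scope.

Lemma D1_line (R : realType) (V : normedModType R) (f : V -> R) (p v : V) :
 'D_1 (fun e : R => f (p + e *: v)) 0 = 'D_v f p /\
 (derivable (fun e : R => f (p + e *: v)) 0 1 <-> derivable f p v).
Proof.
have E : (fun h : R => h^-1 *: (((fun e : R => f (p + e *: v)) \o shift 0) (h *: 1) - f (p + 0 *: v)))
  = (fun h => h^-1 *: ((f \o shift p) (h *: v) - f p)).
  apply: funext => h /=; rewrite scale0r addr0 addr0 [p + _]addrC.
  by rewrite /GRing.scale /= mulr1.
by rewrite /derive /derivable E.
Qed.
Lemma fst_sum (U V : nmodType) I (r : seq I) (P : pred I) (F : I -> U * V) :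
  (\sum_(i <- r | P i) F i).1 = \sum_(i <- r | P i) (F i).1.
Proof. by elim/big_rec2: _ => // i a b _ <-. Qed.
Lemma snd_sum (U V : nmodType) I (r : seq I) (P : pred I) (F : I -> U * V) :
  (\sum_(i <- r | P i) F i).2 = \sum_(i <- r | P i) (F i).2.
Proof. by elim/big_rec2: _ => // i a b _ <-. Qed.

Lemma fstD (U V : nmodType) (a b : U * V) : (a + b).1 = a.1 + b.1.
Proof. by []. Qed.
Lemma sndD (U V : nmodType) (a b : U * V) : (a + b).2 = a.2 + b.2.
Proof. by []. Qed.

Lemma pair_decomp (R : realType) d m n (A : 'M[R]_(m, d)) (B : 'M[R]_(n, d)) :
  ((A, B) : 'M[R]_(m, d) * 'M[R]_(n, d)) =
  \sum_(r < m) \sum_(j < d) A r j *: ((delta_mx r j, 0) : 'M[R]_(m, d) * 'M[R]_(n, d))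
  + \sum_(r < n) \sum_(j < d) B r j *: ((0, delta_mx r j) : 'M[R]_(m, d) * 'M[R]_(n, d)).
Proof.
rewrite [RHS]surjective_pairing; congr pair.
  rewrite fstD fst_sum [X in _ + X]fst_sum [X in _ + X]big1 ?addr0; last first.
    by move=> r _; rewrite fst_sum; apply: big1 => j _ /=; rewrite scaler0.
  transitivity (\sum_(r < m) \sum_(j < d) A r j *: delta_mx r j); first exact: matrix_sum_delta.
  by apply: eq_bigr => r _; rewrite fst_sum.
rewrite sndD snd_sum [X in _ + X]snd_sum [X in X + _]big1 ?add0r; last first.
  by move=> r _; rewrite snd_sum; apply: big1 => j _ /=; rewrite scaler0.
transitivity (\sum_(r < n) \sum_(j < d) B r j *: delta_mx r j); first exact: matrix_sum_delta.
by apply: eq_bigr => r _; rewrite snd_sum.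
Qed.

Lemma D_decomp (R : realType) d m n (f : 'M[R]_(m, d) * 'M[R]_(n, d) -> R)
  (p : 'M[R]_(m, d) * 'M[R]_(n, d)) (A : 'M[R]_(m, d)) (B : 'M[R]_(n, d)) :
  differentiable f p ->
  'D_((A, B) : 'M[R]_(m, d) * 'M[R]_(n, d)) f p =
  \sum_(r < m) \sum_(j < d) A r j * pdx f p r 0 j
  + \sum_(r < n) \sum_(j < d) B r j * pdy f p r 0 j.
Proof.
move=> hf; rewrite deriveE // pair_decomp linearD !linear_sum.
congr (_ + _); apply: eq_bigr => r _; rewrite linear_sum; apply: eq_bigr => j _;
  by rewrite linearZ /= mxE deriveE.
Qed.

Lemma xsegD (R : realType) d N (i : 'I_N) (x eta : 'M[R]_(N.+1, d)) (e : R) :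
  xseg i (x + e *: eta) = xseg i x + e *: xseg i eta.
Proof. by apply/matrixP => r c; rewrite !mxE. Qed.
Lemma ysegD (R : realType) d N (i : 'I_N) (x eta : 'M[R]_(N.+1, d)) (e : R) :
  yseg i (x + e *: eta) = yseg i x + e *: yseg i eta.
Proof. by apply/matrixP => r c; rewrite !mxE. Qed.

Lemma action_derive (R : realType) (d N : nat) (L : lagrangians R d N)
  (hL : forall (i : 'I_N) (p : 'M[R]_(i.+2, d) * 'M[R]_((N - i).+1, d)),
          differentiable (L i) p) (x y eta : 'M[R]_(N.+1, d)) :
  derive1 (fun e : R => action L (x + e *: eta) (y + e *: eta)) 0 =
  \sum_(i < N) 'D_((xseg i eta, yseg i eta) : 'M[R]_(i.+2, d) * 'M[R]_((N - i).+1, d))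
     (L i) (xseg i x, yseg i y).
Proof.
rewrite derive1E.
have -> : (fun e : R => action L (x + e *: eta) (y + e *: eta)) =
  \sum_(i < N) (fun e : R => L i ((xseg i x, yseg i y) + e *: (xseg i eta, yseg i eta))).
  apply: funext => e; rewrite fct_sumE /action; apply: eq_bigr => i _.
  by rewrite xsegD ysegD.
rewrite derive_sum; last first.
  by move=> i; apply/(D1_line _ _ _ _ _).2; apply: diff_derivable.
by apply: eq_bigr => i _; rewrite (D1_line _ _ _ _ _).1.
Qed.

Lemma xpart (R : realType) (d N : nat) (P : forall i : 'I_N, 'I_i.+2 -> 'rV[R]_d)
  (eta : 'M[R]_(N.+1, d)) :
  \sum_(i < N) \sum_(r < i.+2) \sum_(j < d) xseg i eta r j * P i r 0 j =
  \sum_(k < N.+1) \sum_(j < d) eta k j * \sum_(i < N | (k <= i.+1)%N) P i (inord k) 0 j.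
Proof.
have step1 : forall i : 'I_N, \sum_(r < i.+2) \sum_(j < d) xseg i eta r j * P i r 0 j =
   \sum_(k < N.+1) (if (k <= i.+1)%N then \sum_(j < d) eta k j * P i (inord k) 0 j else 0).
  move=> i.
  pose F (r : nat) := \sum_(j < d) eta (inord r) j * P i (inord r) 0 j.
  transitivity (\sum_(r < i.+2) F r).
    by apply: eq_bigr => r _; rewrite /F inord_val; apply: eq_bigr => j _; rewrite mxE.
  rewrite (big_ord_widen N.+1 F); last by rewrite ltnS.
  rewrite big_mkcond; apply: eq_bigr => k _; rewrite ltnS.
  by case: ifP => // _; rewrite /F inord_val.
rewrite (eq_bigr _ (fun i _ => step1 i)) exchange_big; apply: eq_bigr => k _.
rewrite -big_mkcond /= exchange_big; apply: eq_bigr => j _.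
by rewrite mulr_sumr.
Qed.

Lemma ypart (R : realType) (d N : nat) (P : forall i : 'I_N, 'I_(N - i).+1 -> 'rV[R]_d)
  (eta : 'M[R]_(N.+1, d)) :
  \sum_(i < N) \sum_(r < (N - i).+1) \sum_(j < d) yseg i eta r j * P i r 0 j =
  \sum_(k < N.+1) \sum_(j < d) eta k j * \sum_(i < N | (i <= k)%N) P i (inord (k - i)) 0 j.
Proof.
have step1 : forall i : 'I_N, \sum_(r < (N - i).+1) \sum_(j < d) yseg i eta r j * P i r 0 j =
   \sum_(k < N.+1) (if (i <= k)%N then \sum_(j < d) eta k j * P i (inord (k - i)) 0 j else 0).
  move=> i.
  pose F (k : nat) := \sum_(j < d) eta (inord k) j * P i (inord (k - i)) 0 j.
  transitivity (\sum_(i <= k < N.+1) F k); last first.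
    rewrite big_geq_mkord big_mkcond; apply: eq_bigr => k _.
    by case: (i <= k)%N => //; rewrite /F inord_val.
  rewrite -[in RHS](add0n i) big_addn subSn; last by apply: ltnW.
  rewrite big_mkord; apply: eq_bigr => r _.
  by rewrite /F addnK inord_val; apply: eq_bigr => j _; rewrite mxE addnC.
rewrite (eq_bigr _ (fun i _ => step1 i)) exchange_big; apply: eq_bigr => k _.
rewrite -big_mkcond /= exchange_big; apply: eq_bigr => j _.
by rewrite mulr_sumr.
Qed.



Theorem proposition4p5 (R : realType) (d N : nat) (L : lagrangians R d N)
  (hL : forall (i : 'I_N) (p : 'M[R]_(i.+2, d) * 'M[R]_((N - i).+1, d)),
          differentiable (L i) p)
  (xa xb ya yb : 'rV[R]_d) (x y : 'M[R]_(N.+1, d))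
  (hx0 : row ord0 x = xa) (hxN : row ord_max x = xb)
  (hy0 : row ord0 y = ya) (hyN : row ord_max y = yb) :
  (forall eta : 'M[R]_(N.+1, d), row ord0 eta = 0 -> row ord_max eta = 0 ->
     derive1 (fun e : R => action L (x + e *: eta) (y + e *: eta)) 0 = 0)
  <->
  (forall k : 'I_N.+1, (0 < k)%N -> (k < N)%N ->
     \sum_(i < N | (k <= i.+1)%N) pdx (L i) (xseg i x, yseg i y) (inord k)
     + \sum_(i < N | (i <= k)%N) pdy (L i) (xseg i x, yseg i y) (inord (k - i))
     = 0).
Proof.
set E := fun k : 'I_N.+1 =>
     \sum_(i < N | (k <= i.+1)%N) pdx (L i) (xseg i x, yseg i y) (inord k)
     + \sum_(i < N | (i <= k)%N) pdy (L i) (xseg i x, yseg i y) (inord (k - i)).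
have key : forall eta : 'M[R]_(N.+1, d),
    derive1 (fun e : R => action L (x + e *: eta) (y + e *: eta)) 0 =
    \sum_(k < N.+1) \sum_(j < d) eta k j * E k 0 j.
  move=> eta; rewrite action_derive //.
  rewrite (eq_bigr _ (fun i _ => @D_decomp _ _ _ _ _ _ _ _ (hL i _))) big_split /=.
  rewrite (@xpart _ _ _ (fun i r => pdx (L i) (xseg i x, yseg i y) r)).
  rewrite (@ypart _ _ _ (fun i r => pdy (L i) (xseg i x, yseg i y) r)).
  rewrite -big_split; apply: eq_bigr => k _; rewrite -big_split; apply: eq_bigr => j _.
  by rewrite /E !mxE !summxE mulrDr.
split.
- move=> H k k0 kN; apply/rowP => j; rewrite [RHS]mxE.
  have := H (delta_mx k j).
  rewrite key.
  have nk0 : (k == ord0) = false.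
    by apply/negbTE; rewrite -val_eqE /= -lt0n.
  have nkN : (k == ord_max) = false.
    by apply/negbTE; rewrite -val_eqE /= neq_ltn kN.
  have r0 : row ord0 (delta_mx k j : 'M[R]_(N.+1, d)) = 0.
    by apply/rowP => c; rewrite !mxE eq_sym nk0.
  have rN : row ord_max (delta_mx k j : 'M[R]_(N.+1, d)) = 0.
    by apply/rowP => c; rewrite !mxE eq_sym nkN.
  move=> /(_ r0 rN) <-.
  rewrite [RHS](bigD1 k) //= [X in _ = _ + X]big1 ?addr0; last first.
    move=> k' nk'; apply: big1 => j' _; rewrite mxE.
    by rewrite (negbTE nk') /= mul0r.
  rewrite [RHS](bigD1 j) //= [X in _ = _ + X]big1 ?addr0; last first.
    move=> j' nj'; rewrite mxE.
    by rewrite (negbTE nj') andbF mul0r.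
  by rewrite [delta_mx _ _ _ _]mxE !eqxx mul1r.
- move=> H eta h0 hN; rewrite key; apply: big1 => k _; apply: big1 => j _.
  case: (ltnP 0 k) => [kpos|k0].
    case: (ltnP k N) => [kN|kN].
      by rewrite /E (H k kpos kN) mxE mulr0.
    have -> : k = ord_max.
      by apply: val_inj => /=; apply/eqP; rewrite eqn_leq kN -ltnS ltn_ord.
    by have := congr1 (fun M : 'rV[R]_d => M 0 j) hN; rewrite !mxE => ->; rewrite mul0r.
  have -> : k = ord0 by apply: val_inj => /=; apply/eqP; rewrite -leqn0.
  by have := congr1 (fun M : 'rV[R]_d => M 0 j) h0; rewrite !mxE => ->; rewrite mul0r.
Qed.
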